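(* If $q$ is an odd prime power then $f(X):=X^{q+2}+bX^q+cX$ does not permute $\mathbb{F}_{q^2}$ for any $b,c\in\mathbb{F}_{q^2}$ with $b\ne 0$. *)

(* Defs.v *)
From mathcomp Require Import all_boot all_order all_algebra all_field.
Set Implicit Arguments. Unset Strict Implicit. Unset Printing Implicit Defensive.
Import GRing.Theory.
Local Open Scope ring_scope.

Definition fpoly (F : fieldType) (q : nat) (b c : F) (x : F) : F :=
  x ^+ (q + 2) + b * x ^+ q + c * x.

(* Main.v *)
Require Import Defs.
From mathcomp Require Import all_boot all_order all_algebra all_field.
From mathcomp Require Import zify ring.
Import GRing.Theory.
Local Open Scope ring_scope.

Lemma sum_pow (F : finFieldType) (e : nat) : (#|F|%:R : F) = 0 -> (0 < e)%N ->
  \sum_(x : F) x ^+ e = if (#|F|.-1 %| e)%N then -1 else 0.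
Proof.
move=> hc0 he.
have hF : (0 < #|F|)%N by apply: ltnW (finNzRing_gt1 F).
have hn : forall x : F, x != 0 -> x ^+ #|F|.-1 = 1.
  move=> x hx; apply: (mulfI hx); rewrite mulr1 -exprS prednK // expf_card //.
case: ifP => hd.
- rewrite (bigD1 0) //= expr0n gtn_eqF // add0r.
  rewrite (eq_bigr (fun _ => 1)) => [|x hx]; last first.
    by case/dvdnP: hd => w ->; rewrite mulnC exprM hn // expr1n.
  rewrite sumr_const cardC1.
  by apply/eqP; rewrite -addr_eq0 natr1 prednK // hc0.
- have [a ha hae] : exists2 a : F, a != 0 & a ^+ e != 1.
    case: (boolP [exists a : F, (a != 0) && (a ^+ e != 1)]) => [/existsP [a /andP[]]|/existsPn hall]; first by exists a.
    exfalso.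
    have h1 : (1 < #|F|)%N := finNzRing_gt1 F.
    have n_gt0 : (0 < #|F|.-1)%N by lia.
    set n := #|F|.-1 in hn hd n_gt0.
    set r := (e %% n)%N.
    have r_gt0 : (0 < r)%N.
      by rewrite lt0n; apply/negP => /eqP h; move: hd; rewrite /dvdn -/r h eqxx.
    have hroot : all (root ('X^r - 1%:P)) (enum (predC1 (0 : F))).
      apply/allP => x; rewrite mem_enum inE => hx; rewrite rootE !hornerE.
      have := hall x; rewrite hx /= negbK => /eqP.
      rewrite (divn_eq e n) exprD mulnC exprM hn // expr1n mul1r => ->.
      by rewrite subrr.
    have hne : ('X^r - 1%:P : {poly F}) != 0.
      by rewrite -size_poly_eq0 size_XnsubC.
    have := max_poly_roots hne hroot (enum_uniq _).
    rewrite size_XnsubC // -cardE cardC1 -/n => H.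
    have := ltn_mod e n; rewrite n_gt0 -/r. lia.
  have : \sum_(x : F) x ^+ e = a ^+ e * \sum_(x : F) x ^+ e.
    rewrite {1}(reindex_inj (mulfI ha)) /= mulr_sumr; apply: eq_bigr => x _.
    by rewrite exprMn.
  move/eqP; rewrite -subr_eq0 -{1}(mul1r (\sum_(x : F) x ^+ e)) -mulrBl mulf_eq0.
  by rewrite subr_eq0 eq_sym (negbTE hae) /= => /eqP.
Qed.

Lemma binC0 (F : fieldType) (p k : nat) : prime p -> p \in [pchar F] ->
  forall j, (0 < j < p ^ k)%N -> ('C(p ^ k, j))%:R = 0 :> F.
Proof.
move=> hp hc j hj.
have hcp : p \in [pchar {poly F}] by rewrite pchar_poly.
have hnat : [pchar {poly F}].-nat (p ^ k)%N.
  by rewrite (eq_pnat _ (pcharf_eq hcp)) pnatX pnat_id.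
have := exprDn_pchar 'X 1 hnat.
rewrite exprD1n expr1n => /(congr1 (fun P : {poly F} => P`_j)).
rewrite coef_sum coefD coefXn coef1.
have hj' : (j < (p ^ k).+1)%N by lia.
rewrite (bigD1 (Ordinal hj')) //= big1 => [|i hi]; last first.
  rewrite coefMn coefXn.
  have -> : (j == i) = false by apply/negbTE; rewrite eq_sym; move: hi; apply: contra => /eqP h; apply/eqP/val_inj.
  by rewrite mul0rn.
rewrite coefMn coefXn eqxx addr0.
have -> : (j == p ^ k)%N = false by apply/negbTE; lia.
have -> : (j == 0)%N = false by apply/negbTE; lia.
by rewrite addr0 mulr1n.
Qed.

Lemma binm1 (F : fieldType) (p k : nat) : prime p -> p \in [pchar F] ->
  forall j, (j < p ^ k)%N -> ('C((p ^ k)%N.-1, j))%:R = (-1) ^+ j :> F.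
Proof.
move=> hp hc; elim=> [|j IH] hj; first by rewrite bin0 expr0.
have hpk : (0 < p ^ k)%N by rewrite expn_gt0 prime_gt0.
have := @binC0 F p k hp hc j.+1.
rewrite -{2}(prednK hpk) binS natrD IH; last by lia.
move=> /(_ _) H; have {}H := H ltac:(lia).
move/eqP: H; rewrite addr_eq0 => /eqP ->.
by rewrite exprS mulN1r.
Qed.

Lemma expand (F : fieldType) (q h : nat) (b c x : F) :
  fpoly q b c x ^+ (2*h) = \sum_(i < (2*h).+1) \sum_(j < (2*h - i).+1)
    (b ^+ j * c ^+ i *+ 'C(2*h - i, j) *+ 'C(2*h, i)) * x ^+ (2 * (2*h - i - j) + q * (2*h - i) + i).
Proof.
rewrite /fpoly.
have -> : x ^+ (q + 2) + b * x ^+ q = (x ^+ 2 + b) * x ^+ q by rewrite mulrDl -exprD addnC.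
rewrite exprDn; apply: eq_bigr => i _.
rewrite exprMn (exprDn (x ^+ 2) b) !mulr_suml -sumrMnl; apply: eq_bigr => j _.
rewrite !mulrnAl; congr (_ *+ _ *+ _).
rewrite (exprMn _ c x) -!exprM exprD (exprD x (2 * (2 * h - i - j))).
move: (x ^+ (2 * (2 * h - i - j))) (x ^+ (q * (2 * h - i))) (x ^+ i) (b ^+ j) (c ^+ i) => A B C D E.
ring.
Qed.

Local Open Scope nat_scope.
Lemma arith_core :  forall h i j, (0 < h)%N -> (i <= 2*h)%N -> (j <= 2*h - i)%N -> forall w, (2 * (2*h - i - j) + (2*h+1) * (2*h - i) + i = w * ((2*h+1)*(2*h+1)-1))%N -> i = 0%N /\ j = h.
Proof. move=> h i j h0 hi hj w.
have [m [j' [-> -> hm hj']]] : exists m j', [/\ i = 2*h - m, j = m - j', m <= 2*h & j' <= m].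
  exists (2*h - i), (2*h - i - j); split; lia.
have e1 : 2 * (2*h - (2*h - m) - (m - j')) + (2*h+1) * (2*h - (2*h - m)) + (2*h - m) = 2*j' + 2*h * m + 2*h.
  have -> : 2*h - (2*h - m) = m by lia.
  have -> : m - (m - j') = j' by lia. 
  rewrite mulnDl mul1n. lia.
have e2 : (2*h+1)*(2*h+1)-1 = 4*(h*h) + 4*h.
  rewrite !mulnDl !mulnDr. lia.
rewrite e1 e2 => hw.
have hw1 : w = 1.
  case: w hw => [|[|w]] hw; [lia|done|].
  have : h * m <= h * (2 * h) by rewrite leq_mul2l hm orbT.
  move: hw; rewrite !mulnDl !mulnDr. lia.
subst w. rewrite mul1n in hw.
have hm2 : m = 2 * h.
  apply/eqP; rewrite eqn_leq hm /=; apply/negP => /negP; rewrite -ltnNge => hlt.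
  have : h * m <= h * (2 * h - 1) by rewrite leq_mul2l; apply/orP; right; lia.
  rewrite mulnBr muln1 mulnCA. move: hw. rewrite -mulnA. have : h <= h * h by rewrite leq_pmulr. lia.
subst m. split; first lia. move: hw. rewrite -mulnA mulnCA. lia.
Qed.

Lemma arith (q h i j : nat) : q = (2*h+1)%N -> (0 < h)%N -> (i <= 2*h)%N -> (j <= 2*h - i)%N ->
  (0 < 2 * (2*h - i - j) + q * (2*h - i) + i)%N /\
  (((2*h+1)*(2*h+1) - 1 %| 2 * (2*h - i - j) + q * (2*h - i) + i) = (i == 0) && (j == h))%N.
Proof.
move=> -> h0 hi hj; split.
  case: i hi hj => [|i] hi hj; last by rewrite addnS.
  have : (0 < (2*h+1)*(2*h - 0))%N by rewrite muln_gt0; apply/andP; split; lia.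
  lia.
apply/idP/idP.
  case/dvdnP => w hw; have [-> ->] := @arith_core h i j h0 hi hj w hw; by rewrite !eqxx.
case/andP => /eqP -> /eqP ->; apply/dvdnP; exists 1%N; rewrite mul1n !subn0.
have -> : (2 * h - h = h)%N by lia.
rewrite !mulnDl !mulnDr. lia.
Qed.

Local Open Scope ring_scope.

Theorem lemma2p5 (F : finFieldType) (p k : nat) :
  prime p -> (0 < k)%N -> odd (p ^ k) -> #|F| = ((p ^ k) ^ 2)%N ->
  forall b c : F, b != 0 -> ~ bijective (fpoly (p ^ k) b c).
Proof.
move=> hp hk hodd hcard b c hb [g fK gK].
have hq1 : (1 < p ^ k)%N.
  have : (p ^ 1 <= p ^ k)%N by rewrite leq_exp2l ?prime_gt1.
  rewrite expn1 => H; have := prime_gt1 hp; lia.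
have hc : p \in [pchar F].
  apply: (@card_finPcharP F p (k * 2)) => //; by rewrite hcard expnM.
have hc0 : (#|F|%:R : F) = 0.
  apply/eqP; rewrite -(dvdn_pcharf hc) hcard -mulnn; apply: dvdn_mulr.
  exact: dvdn_exp hk (dvdnn p).
have hbin0 := @binm1 F p k hp hc.
move: hodd hcard fK hq1 hbin0.
set q := (p ^ k)%N => hodd hcard fK hq1 hbin0.
have hq : q = (2 * (q./2) + 1)%N.
  have := odd_double_half q; rewrite hodd /= -muln2; lia.
move: hq; set h := q./2 => hq; clearbody h.
have h0 : (0 < h)%N by lia.
have hn : (#|F|.-1 = (2*h+1)*(2*h+1) - 1)%N by rewrite hcard -hq -mulnn subn1.
have S0 : \sum_(x : F) fpoly q b c x ^+ (2*h) = 0.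
  rewrite -(@reindex_inj _ _ _ _ (fpoly q b c) xpredT (fun y => y ^+ (2*h)) (can_inj fK)) /=.
  rewrite sum_pow //; last by lia.
  have -> : (#|F|.-1 %| 2 * h)%N = false.
    apply/negbTE/negP; rewrite hn => /dvdn_leq; move/(_ ltac:(lia)). nia.
  by [].
have hbin : ('C(2*h, h)%:R : F) = (-1) ^+ h.
  have := hbin0 h ltac:(lia); by rewrite hq addn1.
have S1 : \sum_(x : F) fpoly q b c x ^+ (2*h) = - (b ^+ h * (-1) ^+ h).
  rewrite (eq_bigr _ (fun x _ => @expand F q h b c x)).
  rewrite exchange_big /=.
  under eq_bigr => i _ do rewrite exchange_big /=.
  under eq_bigr => i _ do under eq_bigr => j _ do rewrite -mulr_sumr.
  rewrite big_ord_recl [X in _ + X]big1 => [|i _]; last first.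
    apply: big1 => j _.
    have hi : (lift ord0 i <= 2 * h)%N by have := ltn_ord (lift ord0 i); lia.
    have hj : (j <= 2 * h - lift ord0 i)%N by have := ltn_ord j; lia.
    have [hpos hdiv] := arith _ _ _ _ hq h0 hi hj.
    by rewrite sum_pow // hn hdiv /= mulr0.
  rewrite addr0.
  have hh : (h < (2 * h - @nat_of_ord (2*h).+1 ord0).+1)%N by rewrite /= subn0; lia.
  rewrite (bigD1 (Ordinal hh)) //= [X in _ + X]big1 ?addr0 => [|j hj]; last first.
    have hi : (@nat_of_ord (2*h).+1 ord0 <= 2 * h)%N by [].
    have hj' : (j <= 2 * h - @nat_of_ord (2*h).+1 ord0)%N by exact: ltn_ord j.
    have [hpos hdiv] := arith _ _ _ _ hq h0 hi hj'.
    rewrite sum_pow // hn hdiv /=.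
    have -> : (j == h :> nat) = false.
      apply/negbTE; move: hj; apply: contra => /eqP H; apply/eqP/val_inj; exact: H.
    by rewrite mulr0.
  have hi : (@nat_of_ord (2*h).+1 ord0 <= 2 * h)%N by [].
  have hj' : (h <= 2 * h - @nat_of_ord (2*h).+1 ord0)%N by rewrite /= subn0; lia.
  have [hpos hdiv] := arith _ _ _ _ hq h0 hi hj'.
  rewrite sum_pow // hn hdiv /= eqxx /= mulrN1.
  by rewrite expr0 mulr1 subn0 bin0 mulr1n -mulr_natr hbin.
move: S1; rewrite S0 => /eqP; rewrite eq_sym oppr_eq0 mulf_eq0 expf_eq0 (negbTE hb) andbF signr_eq0.
by [].
Qed.
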